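(* Let $R$ be a ring, $n$ a positive integer, and $I$ a proper ideal of $R$. Then the following are equivalent: (1) $I$ is strongly weakly $n$-absorbing; (2) for any ideals $I_1,\dots,I_{n+1}$ of $R$ with $I\subseteq I_1$, if $0\neq I_1\cdots I_{n+1}\subseteq I$ then there are $n$ of the $I_i$'s whose product is contained in $I$.
   Context: All rings are commutative with $1\neq0$. A proper ideal $I$ of $R$ is strongly weakly $n$-absorbing if whenever $0\neq I_1\cdots I_{n+1}\subseteq I$ for ideals $I_1,\dots,I_{n+1}$ of $R$, there are $n$ of the $I_i$'s whose product is contained in $I$. *)

(* Defs.v *)
From mathcomp Require Import all_boot all_algebra.
Set Implicit Arguments. Unset Strict Implicit. Unset Printing Implicit Defensive.
Import GRing.Theory.
Local Open Scope ring_scope.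

Section IdealDefs.
Context {R : comNzRingType}.

Definition sw_is_ideal (I : R -> Prop) : Prop :=
  [/\ I 0, (forall x y, I x -> I y -> I (x + y)), (forall x, I x -> I (- x))
    & (forall r x, I x -> I (r * x))].

Definition sw_proper_ideal (I : R -> Prop) : Prop := sw_is_ideal I /\ ~ I 1.

Definition sw_subset (I J : R -> Prop) : Prop := forall x, I x -> J x.

(* Product of the ideals F i for i in S: the ideal generated by all products
   \prod_(i in S) a_i with a_i in F i (i.e. all finite sums of such products). *)
Definition sw_prod_ideal (k : nat) (F : 'I_k -> R -> Prop) (S : {set 'I_k}) : R -> Prop :=
  fun x => forall J : R -> Prop, sw_is_ideal J ->
    (forall a : 'I_k -> R, (forall i, i \in S -> F i (a i)) -> J (\prod_(i in S) a i)) ->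
    J x.

Definition strongly_weakly_n_absorbing (n : nat) (I : R -> Prop) : Prop :=
  sw_proper_ideal I /\
  forall F : 'I_n.+1 -> R -> Prop, (forall i, sw_is_ideal (F i)) ->
    (exists x, sw_prod_ideal F setT x /\ x <> 0) ->
    sw_subset (sw_prod_ideal F setT) I ->
    exists j : 'I_n.+1, sw_subset (sw_prod_ideal F [set~ j]) I.

End IdealDefs.

(* Main.v *)
Require Import Defs.
From mathcomp Require Import all_boot all_algebra.
Local Open Scope ring_scope.
Import GRing.Theory.

Lemma prod_mono (R : comNzRingType) k (F G : 'I_k -> R -> Prop) (S : {set 'I_k}) :
  (forall i, i \in S -> sw_subset (F i) (G i)) ->
  sw_subset (sw_prod_ideal F S) (sw_prod_ideal G S).
Proof.
move=> H x Hx J HJ Hgen; apply: Hx => // a Ha; apply: Hgen => i iS.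
exact: H (Ha i iS).
Qed.

Lemma prod_sub (R : comNzRingType) k (F : 'I_k -> R -> Prop) (S : {set 'I_k}) (I : R -> Prop) :
  sw_is_ideal I ->
  (forall a : 'I_k -> R, (forall i, i \in S -> F i (a i)) -> I (\prod_(i in S) a i)) ->
  sw_subset (sw_prod_ideal F S) I.
Proof. by move=> HI H x Hx; apply: Hx. Qed.

Theorem mainTheorem12 (R : comNzRingType) (n : nat) (hn : (0 < n)%N)
  (I : R -> Prop) (hI : sw_proper_ideal I) :
  strongly_weakly_n_absorbing n I <->
  (forall F : 'I_n.+1 -> R -> Prop, (forall i, sw_is_ideal (F i)) ->
     sw_subset I (F ord0) ->
     (exists x, sw_prod_ideal F setT x /\ x <> 0) ->
     sw_subset (sw_prod_ideal F setT) I ->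
     exists j : 'I_n.+1, sw_subset (sw_prod_ideal F [set~ j]) I).
Proof.
split.
  by move=> [_ H] F HF _; apply: H.
move=> H; split => // F HF [x [Hx x0]] HFI.
have [[I0 ID IN IM] _] := hI.
pose G := fun i : 'I_n.+1 => if i == ord0 then
   (fun x => exists a b, F ord0 a /\ I b /\ x = a + b) else F i.
have FG : forall i, sw_subset (F i) (G i).
  move=> i y Hy; rewrite /G; case: (i =P ord0) => [Ei|//]; subst i.
  by exists y, 0; rewrite addr0.
have HG : forall i, sw_is_ideal (G i).
  move=> i; rewrite /G; case: eqP => // _.
  have [F0 FD FN FM] := HF ord0.
  split.
  - by exists 0, 0; rewrite addr0.
  - move=> y z [a [b [Ha [Hb ->]]]] [c [d [Hc [Hd ->]]]].
    exists (a + c), (b + d); split; [exact: FD|split; [exact: ID|]].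
    by rewrite addrACA.
  - move=> y [a [b [Ha [Hb ->]]]]; exists (- a), (- b).
    by split; [exact: FN|split; [exact: IN|rewrite opprD]].
  - move=> r y [a [b [Ha [Hb ->]]]]; exists (r * a), (r * b).
    by split; [exact: FM|split; [exact: IM|rewrite mulrDr]].
have [j Hj] : exists j : 'I_n.+1, sw_subset (sw_prod_ideal G [set~ j]) I.
  apply: H => //.
  - move=> y Hy; rewrite /G eqxx; exists 0, y; rewrite add0r; have [F0 _ _ _] := HF ord0; by [].
  - exists x; split => //; exact: prod_mono Hx.
  - apply: prod_sub => // a Ha.
    have := Ha ord0 (in_setT _); rewrite /G eqxx => -[f [b [Hf [Hb Hab]]]].
    rewrite (bigD1 ord0) ?in_setT //= Hab mulrDl.
    apply: ID; last first.
      by rewrite mulrC; apply: IM.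
    pose a' := fun i : 'I_n.+1 => if i == ord0 then f else a i.
    have -> : f * \prod_(i in setT | i != ord0) a i = \prod_(i in setT) a' i.
      rewrite [RHS](bigD1 ord0) ?in_setT //= /a' eqxx; congr (_ * _).
      by apply: eq_bigr => i /andP[_ /negbTE ->].
    apply: HFI => J HJ Hgen; apply: Hgen => i _.
    rewrite /a'; case: (i =P ord0) => [->//|/eqP ne].
    by have := Ha i (in_setT _); rewrite /G (negbTE ne).
exists j; move=> y Hy; apply: Hj; apply: prod_mono Hy => i _; exact: FG.
Qed.
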